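(* Let $u=(p,q)$ and $v=(r,s)$ be primitive vectors in $\mathbb{Z}^2$ with $\det(u,v)=ps-qr=n\ge 2$, let $d_\pm=\gcd(u\pm v)$ (the gcd of the coordinates of $u\pm v$), and let $a$ be the unique integer with $0\le a<n$ such that $Mu=(1,0)$ and $Mv=(a,n)$ for some $M\in\mathrm{SL}_2(\mathbb{Z})$. Then the following are equivalent: (i) $\max\{d_+,d_-\}=n$ and $\min\{d_+,d_-\}\in\{1,2\}$; (ii) $a\equiv\pm1\pmod n$; (iii) $u\equiv\pm v\pmod n$ (componentwise congruence). In this case the non-maximal thread degree $\min\{d_+,d_-\}$ equals $\gcd(n,2)$; in particular it equals $1$ if $n$ is odd and $2$ if $n$ is even.
   Context: A vector $(x,y)\in\mathbb{Z}^2$ is primitive if $\gcd(x,y)=1$. For such $u,v$ with $\det(u,v)=n\ge2$ there is $M\in\mathrm{SL}_2(\mathbb{Z})$ with $Mu=(1,0)$, $Mv=(a,n)$, $0\le a<n$, $\gcd(a,n)=1$, and $a$ is determined uniquely by these conditions. *)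

(* Defs.v *)
From HB Require Import structures.
From mathcomp Require Import all_boot all_order all_algebra.
Set Implicit Arguments. Unset Strict Implicit. Unset Printing Implicit Defensive.
Import Order.TTheory GRing.Theory Num.Theory.
Local Open Scope ring_scope.

Definition vec2 (x y : int) : 'cV[int]_2 :=
  \col_(i < 2) (if i == ord0 then x else y).

Definition vgcd (x y : int) : int := gcdz x y.

Definition primitive (x y : int) : Prop := gcdz x y = 1.

Definition det2 (p q r s : int) : int := p * s - q * r.

Definition inSL2 (M : 'M[int]_2) : Prop := \det M = 1.

(* Main.v *)
Require Import Defs.
From HB Require Import structures.
From mathcomp Require Import all_boot all_order all_algebra.
From mathcomp Require Import ring.
Import Order.TTheory GRing.Theory Num.Theory.
Local Open Scope ring_scope.

Lemma dvd_lin (d x y c e : int) : (d %| x)%Z -> (d %| y)%Z -> (d %| c * x + e * y)%Z.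
Proof. by move=> hx hy; rewrite rpredD ?dvdz_mull. Qed.

Lemma key (m00 m01 m10 m11 x y X Y : int) :
  X = m00 * x + m01 * y -> Y = m10 * x + m11 * y -> x = m11 * X - m01 * Y -> y = m00 * Y - m10 * X ->
  forall d, ((d %| x)%Z && (d %| y)%Z) = ((d %| X)%Z && (d %| Y)%Z).
Proof.
move=> hX hY hx hy d; apply/idP/idP => /andP [h1 h2]; apply/andP; split.
- by rewrite hX dvd_lin.
- by rewrite hY dvd_lin.
- by rewrite hx -mulNr addrC dvd_lin.
- by rewrite hy -mulNr dvd_lin.
Qed.

Lemma gcd_eq (x y X Y : int) :
  (forall d, ((d %| x)%Z && (d %| y)%Z) = ((d %| X)%Z && (d %| Y)%Z)) ->
  gcdz x y = gcdz X Y.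
Proof.
move=> H.
have h1 : (gcdz x y %| gcdz X Y)%Z by rewrite dvdz_gcd -H dvdz_gcdl dvdz_gcdr.
have h2 : (gcdz X Y %| gcdz x y)%Z by rewrite dvdz_gcd H dvdz_gcdl dvdz_gcdr.
move: h1 h2; rewrite /gcdz !dvdzE /= => h1 h2; congr Posz; apply/eqP.
by rewrite eqn_dvd h1 h2.
Qed.

Lemma gcd_le (x n : int) : 0 < n -> gcdz x n <= n.
Proof.
move=> hn; have := dvdz_gcdr x n; rewrite /gcdz dvdzE /=.
case: n hn => // k hk /dvdn_leq; rewrite lez_nat; apply; exact: hk.
Qed.

Lemma gcd_n (x n : int) : 0 <= n -> (gcdz x n == n) = (n %| x)%Z.
Proof.
move=> hn; apply/eqP/idP.
- by move=> h; apply/gcdz_idPr; rewrite h gez0_abs.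
- by move/gcdz_idPr => ->; rewrite gez0_abs.
Qed.

Lemma gcd2 (n : int) : gcdz 2 n = if (2 %| n)%Z then 2 else 1.
Proof.
case: ifP => h; first by move/gcdz_idPl: h.
have := dvdz_gcdl 2 n; have := dvdz_gcdr 2 n.
rewrite /gcdz !dvdzE /=.
have : (0 < gcdn 2 `|n|)%N by rewrite gcdn_gt0.
move: (gcdn 2 `|n|) => g g0 gn /dvdn_leq g2.
have {}g2 := g2 isT.
have : (g == 1)%N || (g == 2)%N by case: g g0 g2 {gn} => [|[|[|]]].
case/orP => /eqP eg; first by rewrite eg.
by move: h gn; rewrite dvdzE /= eg => ->.
Qed.

Lemma det22 (M : 'M[int]_2) : \det M = M 0 0 * M 1 1 - M 0 1 * M 1 0.
Proof.
rewrite (expand_det_row M 0) !big_ord_recl big_ord0 /cofactor !det_mx11 !mxE /=.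
rewrite addr0 expr0 expr1 !mul1r mulN1r.
have -> : lift 0 0 = 1 :> 'I_2 by apply/val_inj.
have -> : lift 1 (0 : 'I_1) = 0 :> 'I_2 by apply/val_inj.
by rewrite mulrN.
Qed.

Lemma mv (M : 'M[int]_2) x y i : (M *m vec2 x y) i 0 = M i 0 * x + M i 1 * y.
Proof.
rewrite mxE !big_ord_recl big_ord0 !mxE /= addr0.
by have -> : lift 0 0 = 1 :> 'I_2 by apply/val_inj.
Qed.

Lemma v2 x y i : vec2 x y i 0 = if i == 0 then x else y.
Proof. by rewrite mxE. Qed.

Theorem mainTheorem3 (p q r s n a : int) (M : 'M[int]_2) :
  primitive p q -> primitive r s ->
  det2 p q r s = n -> 2 <= n ->
  0 <= a -> a < n ->
  inSL2 M -> M *m vec2 p q = vec2 1 0 -> M *m vec2 r s = vec2 a n ->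
  let dp := vgcd (p + r) (q + s) in
  let dm := vgcd (p - r) (q - s) in
  ((Num.max dp dm = n /\ (Num.min dp dm = 1 \/ Num.min dp dm = 2)) <->
     ((a == 1 %[mod n])%Z \/ (a == -1 %[mod n])%Z)) /\
  (((a == 1 %[mod n])%Z \/ (a == -1 %[mod n])%Z) <->
     (((p == r %[mod n])%Z /\ (q == s %[mod n])%Z) \/
      ((p == - r %[mod n])%Z /\ (q == - s %[mod n])%Z))) /\
  ((Num.max dp dm = n /\ (Num.min dp dm = 1 \/ Num.min dp dm = 2)) ->
     Num.min dp dm = gcdz n 2 /\
     (~~ (2 %| n)%Z -> Num.min dp dm = 1) /\
     ((2 %| n)%Z -> Num.min dp dm = 2)).
Proof.
move=> _ _ hdet hn2 _ _ hSL hu hv dp dm.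
have e1 := congr1 (fun A : 'M[int]_(2,1) => A 0 0) hu; have e2 := congr1 (fun A : 'M[int]_(2,1) => A 1 0) hu.
have e3 := congr1 (fun A : 'M[int]_(2,1) => A 0 0) hv; have e4 := congr1 (fun A : 'M[int]_(2,1) => A 1 0) hv.
move: e1 e2 e3 e4 => /=; rewrite !mv !v2 /= => e1 e2 e3 e4.
move: hSL; rewrite /inSL2 det22 => dt.
move: (M 0 0) (M 0 1) (M 1 0) (M 1 1) e1 e2 e3 e4 dt => m00 m01 m10 m11 e1 e2 e3 e4 dt.
have hp : p = m11.
  have h : p = m11 * (m00 *  p + m01 *  q) - m01 * (m10 *  p + m11 *  q) + p * (1 - (m00 * m11 - m01 * m10)) by ring.
  rewrite e1 e2 dt in h; rewrite {1}h; ring.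
have hq : q = - m10.
  have h : q = m00 * (m10 *  p + m11 *  q) - m10 * (m00 *  p + m01 *  q) + q * (1 - (m00 * m11 - m01 * m10)) by ring.
  rewrite e1 e2 dt in h; rewrite {1}h; ring.
have hr : r = m11 * a - m01 * n.
  have h : r = m11 * (m00 *  r + m01 *  s) - m01 * (m10 *  r + m11 *  s) + r * (1 - (m00 * m11 - m01 * m10)) by ring.
  rewrite e3 e4 dt in h; rewrite {1}h; ring.
have hs : s = m00 * n - m10 * a.
  have h : s = m00 * (m10 *  r + m11 *  s) - m10 * (m00 *  r + m01 *  s) + s * (1 - (m00 * m11 - m01 * m10)) by ring.
  rewrite e3 e4 dt in h; rewrite {1}h; ring.
have kp : forall d, ((d %| p + r)%Z && (d %| q + s)%Z) = ((d %| 1 + a)%Z && (d %| n)%Z).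
  apply: (key m00 m01 m10 m11).
  - rewrite -e1 -e3. ring.
  - rewrite -[n]add0r -{1}e2 -e4. ring.
  - rewrite hp hr. ring.
  - rewrite hq hs. ring.
have km : forall d, ((d %| p - r)%Z && (d %| q - s)%Z) = ((d %| 1 - a)%Z && (d %| - n)%Z).
  apply: (key m00 m01 m10 m11).
  - by rewrite -e1 -e3; ring.
  - by rewrite -[- n]add0r -{1}e2 -e4; ring.
  - by rewrite hp hr; ring.
  - by rewrite hq hs; ring.
have n0 : 0 < n by apply: lt_le_trans hn2.
have hA : dp = gcdz (1 + a) n by rewrite /dp /vgcd; apply: gcd_eq.
have hB : dm = gcdz (1 - a) n by rewrite /dm /vgcd -(gcdzN _ n); apply: gcd_eq.
have ndn : (n %| - n)%Z by rewrite rpredN dvdzz.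
have cg1 : (n %| p - r)%Z /\ (n %| q - s)%Z <-> (n %| 1 - a)%Z.
  by have := km n; rewrite ndn andbT => <-; split; [case=> -> -> | case/andP].
have cg2 : (n %| p - - r)%Z /\ (n %| q - - s)%Z <-> (n %| 1 + a)%Z.
  by have := kp n; rewrite dvdzz andbT !opprK => <-; split; [case=> -> -> | case/andP].
rewrite !eqz_mod_dvd.
have c1 : (n %| a - 1)%Z = (n %| 1 - a)%Z by rewrite -opprB rpredN.
have c2 : (n %| a - -1)%Z = (n %| 1 + a)%Z by rewrite opprK addrC.
rewrite c1 c2.
have PA : (dp == n) = (n %| 1 + a)%Z by rewrite hA gcd_n // ltW.
have PB : (dm == n) = (n %| 1 - a)%Z by rewrite hB gcd_n // ltW.
have FA : (n %| 1 - a)%Z -> dp = gcdz 2 n.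
  move=> h; rewrite hA; apply: gcd_eq => d; apply/idP/idP => /andP [h1 h2]; rewrite h2 andbT.
  - have h3 : (d %| 1 - a)%Z by apply: dvdz_trans h.
    rewrite (_ : 2 = (1 + a) + (1 - a)); [by rewrite rpredD | ring].
  - have h3 : (d %| 1 - a)%Z by apply: dvdz_trans h.
    rewrite (_ : 1 + a = 2 - (1 - a)); [by rewrite rpredB | ring].
have FB : (n %| 1 + a)%Z -> dm = gcdz 2 n.
  move=> h; rewrite hB; apply: gcd_eq => d; apply/idP/idP => /andP [h1 h2]; rewrite h2 andbT.
  - have h3 : (d %| 1 + a)%Z by apply: dvdz_trans h.
    rewrite (_ : 2 = (1 - a) + (1 + a)); [by rewrite rpredD | ring].
  - have h3 : (d %| 1 + a)%Z by apply: dvdz_trans h.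
    rewrite (_ : 1 - a = 2 - (1 + a)); [by rewrite rpredB | ring].
have hdp : dp <= n by rewrite hA gcd_le.
have hdm : dm <= n by rewrite hB gcd_le.
have hG : gcdz 2 n <= n /\ (gcdz 2 n = 1 \/ gcdz 2 n = 2).
  rewrite gcd2; case: ifP => _; split; by [ | right | left | apply: le_trans hn2].
rewrite gcdzC.
move: (n %| 1 + a)%Z (n %| 1 - a)%Z cg1 cg2 PA PB FA FB => X1 X2 cg1 cg2 PA PB FA FB.
case: hG => hGle hG12.
have M1 : Num.max dp dm = n -> X2 \/ X1.
  case: (leP dp dm) => _ h; [left; by rewrite -PB h | right; by rewrite -PA h].
have M2 : X2 \/ X1 -> Num.max dp dm = n /\ Num.min dp dm = gcdz 2 n.
  case=> h.
  - have e := FA h; have := h; rewrite -PB => /eqP e'; rewrite e e'.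
    case: (leP (gcdz 2 n) n) => h' //.
    by move: (lt_le_trans h' hGle); rewrite ltxx.
  - have e := FB h; have := h; rewrite -PA => /eqP e'; rewrite e e' maxC minC.
    case: (leP (gcdz 2 n) n) => h' //.
    by move: (lt_le_trans h' hGle); rewrite ltxx.
split; first split.
- by case=> /M1.
- by move/M2 => [-> ->].
split; first split.
- by case=> h; [left; apply/cg1 | right; apply/cg2].
- by case=> h; [left; apply/cg1 | right; apply/cg2].
case=> /M1 /M2 [_ ->]; split => //.
by rewrite gcd2; split; case: ifP.
Qed.
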